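(* Fix a prime $q\ge3$. Let $T_1,T_2,T_3\subseteq\mathbb{F}_q$ be arbitrary sets of size $\ell>0$, and let $X_1,X_2$ be independent with $X_1$ uniform on $T_1$ and $X_2$ uniform on $T_2$. Then $$\Pr[X_1+X_2\in T_3]\le\begin{cases}\frac34+\frac{1}{4\ell^2}+\frac{\max(0,3\ell-2q-1)\cdot(3\ell-2q+1)}{4\ell^2}, & \ell\text{ odd},\\ \frac34+\frac{\max(0,3\ell-2q)^2}{4\ell^2}, & \ell\text{ even},\end{cases}$$ and this bound is tight for all $\ell$ (i.e., for every $\ell$ there exist such $T_1,T_2,T_3$ attaining it). In particular: (1) if $\ell\le 2q/3$, then $\Pr[X_1+X_2\in T_3]\le\frac34+\frac{1}{4\ell^2}$ when $\ell$ is odd and $\le\frac34$ when $\ell$ is even; (2) if $2q/3<\ell\le q-1$, then $\Pr[X_1+X_2\in T_3]\le\frac{q^2-3\ell(q-\ell)}{\ell^2}$. *)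

(* Defs.v *)
From mathcomp Require Import all_boot all_order all_algebra.
Set Implicit Arguments. Unset Strict Implicit. Unset Printing Implicit Defensive.
Import Order.TTheory GRing.Theory Num.Theory.
Local Open Scope ring_scope.

Definition prob_sum_in (q : nat) (T1 T2 T3 : {set 'F_q}) : rat :=
  (#|[set p : 'F_q * 'F_q | [&& p.1 \in T1, p.2 \in T2 & p.1 + p.2 \in T3]]|)%:R
  / (#|T1| * #|T2|)%:R.

Definition sum_bound (q l : nat) : rat :=
  let a : rat := 3 * l%:R - 2 * q%:R in
  if odd l then
    3 / 4 + 1 / (4 * l%:R ^+ 2) + Num.max 0 (a - 1) * (a + 1) / (4 * l%:R ^+ 2)
  else
    3 / 4 + (Num.max 0 a) ^+ 2 / (4 * l%:R ^+ 2).

(* Main.v *)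
Require Import Defs.
From mathcomp Require Import all_boot all_order all_algebra.
From mathcomp Require Import zify ring lra.
Set Implicit Arguments. Unset Strict Implicit. Unset Printing Implicit Defensive.
Import Order.TTheory GRing.Theory Num.Theory.

Lemma card_sum (T : finType) (S : {set T}) : #|S| = \sum_(x : T) (x \in S).
Proof. by rewrite -sum1_card big_mkcond /=; apply: eq_bigr => x _; case: (x \in S). Qed.

Lemma sum_shift (p : nat) (c : 'F_p) (g : 'F_p -> nat) :
  \sum_(x : 'F_p) g (x + c)%R = \sum_(x : 'F_p) g x.
Proof. by rewrite [RHS](reindex_inj (addIr c)). Qed.

Lemma sum_neg (p : nat) (c : 'F_p) (g : 'F_p -> nat) :
  \sum_(x : 'F_p) g (c - x)%R = \sum_(x : 'F_p) g x.
Proof.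
have inj : injective (fun x : 'F_p => (c - x)%R).
  by move=> x y /= /eqP; rewrite (can2_eq (subKr c) (subKr c)) subKr => /eqP.
by rewrite [RHS](reindex_inj inj).
Qed.

Definition rr (p : nat) (A B : {set 'F_p}) (x : 'F_p) : nat :=
  \sum_(a : 'F_p) ((a \in A) && ((x - a)%R \in B)).
Definition ff (p : nat) (k : nat) (A B : {set 'F_p}) : nat :=
  \sum_(x : 'F_p) minn k (rr A B x).

Lemma rr_le (p : nat) (A B : {set 'F_p}) x : rr A B x <= #|B|.
Proof.
rewrite /rr card_sum -(sum_neg x); apply: leq_sum => a _.
by rewrite subKr; case: (_ \in A).
Qed.

Lemma sum_rr (p : nat) (A B : {set 'F_p}) :
  \sum_x rr A B x = #|A| * #|B|.
Proof.
rewrite /rr exchange_big /= card_sum big_distrl /=; apply: eq_bigr => a _.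
case: (a \in A) => /=; last by rewrite mul0n big1.
rewrite mul1n card_sum -(sum_shift a); apply: eq_bigr => x _.
by rewrite addrK.
Qed.


Definition Ap (p : nat) (A B : {set 'F_p}) e := A :|: [set y | (y - e)%R \in B].
Definition Bp (p : nat) (A B : {set 'F_p}) e := [set y in B | (y + e)%R \in A].
Definition A0 (p : nat) (A B : {set 'F_p}) e := [set y in A | (y - e)%R \notin B].
Definition B0 (p : nat) (A B : {set 'F_p}) e := [set y in B | (y + e)%R \notin A].

Lemma decomp (p : nat) (A B : {set 'F_p}) e x :
  rr A B x = rr (Ap A B e) (Bp A B e) x + rr (A0 A B e) (B0 A B e) x.
Proof.
set P := fun a : 'F_p => a \in A.
set Q := fun a : 'F_p => (a - e)%R \in B.
set R := fun a : 'F_p => (x - a)%R \in B.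
set S := fun a : 'F_p => (x - a + e)%R \in A.
have H : \sum_a [&& P a, Q a, R a & ~~ S a] = \sum_a [&& ~~ P a, Q a, R a & S a].
  rewrite -(sum_neg (x + e)%R); apply: eq_bigr => a _.
  rewrite /P /Q /R /S.
  have -> : (x + e - a - e = x - a)%R by ring.
  have -> : (x - (x + e - a) = a - e)%R by ring.
  have -> : (x + e - a = x - a + e)%R by ring.
  rewrite subrK.
  by case: (a \in A); case: (_ \in B); case: (_ \in B); case: (_ \in A).
have E1 : rr A B x = \sum_a [&& P a, R a & S a] + \sum_a [&& P a, ~~ Q a, R a & ~~ S a]
    + \sum_a [&& P a, Q a, R a & ~~ S a].
  rewrite -!big_split /=; apply: eq_bigr => a _; rewrite /P /Q /R /S.
  by case: (a \in A); case: (_ \in B); case: (_ \in B); case: (_ \in A).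
have E2 : rr (Ap A B e) (Bp A B e) x = \sum_a [&& P a, R a & S a] + \sum_a [&& ~~ P a, Q a, R a & S a].
  rewrite -!big_split /=; apply: eq_bigr => a _; rewrite /P /Q /R /S /Ap /Bp !inE.
  by case: (a \in A); case: (_ \in B); case: (_ \in B); case: (_ \in A).
have E3 : rr (A0 A B e) (B0 A B e) x = \sum_a [&& P a, ~~ Q a, R a & ~~ S a].
  apply: eq_bigr => a _; rewrite /P /Q /R /S /A0 /B0 !inE.
  by case: (a \in A); case: (_ \in B); case: (_ \in B); case: (_ \in A).
by rewrite E1 E2 E3 H; lia.
Qed.

Lemma card_Ap (p : nat) (A B : {set 'F_p}) e : #|Ap A B e| + #|Bp A B e| = #|A| + #|B|.
Proof.
rewrite !card_sum -[X in _ + X = _](sum_shift (- e)%R) -[X in _ = _ + X](sum_shift (- e)%R).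
rewrite -!big_split /=; apply: eq_bigr => a _; rewrite /Ap /Bp !inE.
rewrite subrK.
by case: (a \in A); case: (_ \in B).
Qed.

Lemma card_A0 (p : nat) (A B : {set 'F_p}) e : #|A0 A B e| + #|Bp A B e| = #|A|.
Proof.
rewrite !card_sum -[X in _ + X = _](sum_shift (- e)%R).
rewrite -!big_split /=; apply: eq_bigr => a _; rewrite /A0 /Bp !inE.
rewrite subrK.
by case: (a \in A); case: (_ \in B).
Qed.

Lemma card_B0 (p : nat) (A B : {set 'F_p}) e : #|B0 A B e| + #|Bp A B e| = #|B|.
Proof.
rewrite !card_sum -!big_split /=; apply: eq_bigr => a _; rewrite /B0 /Bp !inE.
by case: (a \in B); case: (_ \in A).
Qed.

Lemma closed_full (p : nat) (A : {set 'F_p}) (d a0 : 'F_p) :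
  d != 0%R -> a0 \in A -> (forall a, a \in A -> (a + d)%R \in A) -> forall y, y \in A.
Proof.
move=> dn0 a0A cl y.
have H : forall n, (a0 + d *+ n)%R \in A.
  elim=> [|n IH]; first by rewrite mulr0n addr0.
  by rewrite mulrS (addrC d) addrA; apply: cl.
have -> : y = (a0 + d *+ (nat_of_ord ((y - a0) / d)%R))%R.
  rewrite -mulr_natr natr_Zp mulrC divfK //; ring.
exact: H.
Qed.

Lemma pollard (p : nat) : prime p -> forall n (A B : {set 'F_p}) k,
  #|B| <= n -> k <= #|A| -> k <= #|B| ->
  k * minn p (#|A| + #|B| - k) <= ff k A B.
Proof.
move=> pr; elim=> [|n IH] A B k hB hA hkB.
  have -> : k = 0 by lia.
  by rewrite mul0n.
case: (posnP k) => [-> | kpos]; first by rewrite mul0n.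
have cardF : #|'F_p| = p by rewrite card_Fp.
case: (boolP [exists a, exists b, exists b', [&& a \in A, b \in B, b' \in B & (b' + (a - b))%R \notin A]]).
- move=> /existsP [a /existsP [b /existsP [b' /and4P [aA bB b'B nA]]]].
  set e := (a - b)%R.
  have c1 := card_Ap A B e.
  have c2 := card_A0 A B e.
  have c3 := card_B0 A B e.
  have m1 : 0 < #|Bp A B e|.
    by apply/card_gt0P; exists b; rewrite /Bp !inE bB /e; have -> : (b + (a - b) = a)%R by ring.
  have m2 : 0 < #|B0 A B e|.
    by apply/card_gt0P; exists b'; rewrite /B0 !inE b'B.
  set m := #|Bp A B e| in m1 c1 c2 c3 *.
  case: (leqP k m) => hkm.
  + apply: (@leq_trans (ff k (Ap A B e) (Bp A B e))).
      have -> : #|A| + #|B| = #|Ap A B e| + #|Bp A B e| by rewrite c1.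
      apply: IH; rewrite /m in hkm c3 c2 c1 *; lia.
    apply: leq_sum => x _; rewrite (decomp A B e x).
    lia.
  + have IH2 := IH (A0 A B e) (B0 A B e) (k - m).
    have hA' : #|Ap A B e| <= p by rewrite -[X in _ <= X]cardF max_card.
    have L : \sum_x rr (Ap A B e) (Bp A B e) x + ff (k - m) (A0 A B e) (B0 A B e) <= ff k A B.
      rewrite -big_split /=; apply: leq_sum => x _; rewrite (decomp A B e x).
      have := rr_le (Ap A B e) (Bp A B e) x; rewrite -/m => hr.
      lia.
    rewrite sum_rr -/m in L.
    have IH3 : (k - m) * minn p (#|A0 A B e| + #|B0 A B e| - (k - m)) <= ff (k - m) (A0 A B e) (B0 A B e).
      apply: IH2; lia.
    have e1 : minn p (#|A0 A B e| + #|B0 A B e| - (k - m)) = #|A| + #|B| - m - k by lia.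
    have e2 : minn p (#|A| + #|B| - k) = #|A| + #|B| - k by lia.
    rewrite e1 in IH3; rewrite e2.
    have e3 : #|Ap A B e| = #|A| + #|B| - m by lia.
    rewrite e3 in L.
    have : k * (#|A| + #|B| - k) = (#|A| + #|B| - m) * m + (k - m) * (#|A| + #|B| - m - k).
      clear -hA hkB hkm.
      move: (#|A|) (#|B|) hA hkB => X Y hX hY.
      have [u ->] : exists u, X = k + u by exists (X - k); lia.
      have [v ->] : exists v, Y = k + v by exists (Y - k); lia.
      have [w ->] : exists w, k = m + w.+1 by exists (k - m).-1; lia.
      nia.
    lia.
- rewrite negb_exists => /forallP cl.
  have cl' : forall a b b', a \in A -> b \in B -> b' \in B -> (b' + (a - b))%R \in A.
    move=> a b b' aA bB b'B; move: (cl a); rewrite negb_exists => /forallP /(_ b); rewrite negb_exists => /forallP /(_ b').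
    by rewrite aA bB b'B /= negbK.
  have [b0 b0B] : exists b0, b0 \in B by apply/card_gt0P; lia.
  have [a0 a0A] : exists a0, a0 \in A by apply/card_gt0P; lia.
  have L : k * #|A| <= ff k A B.
    rewrite card_sum -(sum_shift (- b0)%R) big_distrr /=; apply: leq_sum => x _.
    case xA: ((x + - b0)%R \in A); last by rewrite muln0.
    rewrite muln1 leq_min leqnn /= (leq_trans hkB) //.
    rewrite card_sum /rr -(sum_neg x); apply: leq_sum => a _.
    rewrite subKr.
    case aB: (a \in B); last by [].
    have := cl' _ _ _ xA aB b0B.
    have -> : (b0 + (x - b0 - a) = x - a)%R by ring.
    by move=> ->.
  case: (leqP #|B| 1) => hB1.
  + have k1 : k = 1 by lia.
    rewrite k1 in L *.
    have -> : #|B| = 1 by lia.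
    by rewrite mul1n in L *; apply: leq_trans L; rewrite addnK; lia.
  + have [b1 [b2 [b1B b2B b12]]] := card_gt1P hB1.
    have full := closed_full (d := (b1 - b2)%R) _ a0A.
    have AT : #|A| = p.
      have -> : A = setT.
        apply/setP => y; rewrite inE; apply: full; first by rewrite subr_eq0.
        move=> a aA; have := cl' _ _ _ aA b2B b1B.
        by have -> : (b1 + (a - b2) = a + (b1 - b2))%R by ring.
      by rewrite cardsT.
    rewrite AT in L; apply: leq_trans L.
    by rewrite leq_mul2l geq_minl orbT.
Qed.


Definition FF (p : nat) (A B C : {set 'F_p}) : nat :=
  \sum_(a : 'F_p) \sum_(b : 'F_p) [&& a \in A, b \in B & (a + b)%R \in C].

Lemma card_FF (p : nat) (A B C : {set 'F_p}) :
  #|[set x : 'F_p * 'F_p | [&& x.1 \in A, x.2 \in B & (x.1 + x.2)%R \in C]]| = FF A B C.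
Proof.
rewrite card_sum /FF pair_bigA /=; apply: eq_bigr => x _; by rewrite inE.
Qed.

Lemma FF_rr (p : nat) (A B C : {set 'F_p}) :
  FF A B C = \sum_x (x \in C) * rr A B x.
Proof.
rewrite /rr; under eq_bigr do rewrite big_distrr /=.
rewrite exchange_big /=; apply: eq_bigr => a _.
rewrite -[RHS](sum_shift a); apply: eq_bigr => b _.
rewrite addrK (addrC b).
by case: (a \in A); case: (b \in B); case: (_ \in C).
Qed.

Lemma FF_C (p : nat) (A B C : {set 'F_p}) : FF A B C + FF A B (~: C) = #|A| * #|B|.
Proof.
rewrite /FF -big_split !card_sum big_distrl /=; apply: eq_bigr => a _.
rewrite -big_split big_distrr /=; apply: eq_bigr => b _.
rewrite inE.
by case: (a \in A); case: (b \in B); case: (_ \in C).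
Qed.

Lemma FF_A (p : nat) (A B C : {set 'F_p}) : FF A B C + FF (~: A) B C = #|B| * #|C|.
Proof.
rewrite /FF [X in X + _]exchange_big [X in _ + X]exchange_big -big_split /= !card_sum big_distrl /=; apply: eq_bigr => b _.
rewrite -big_split /= big_distrr /=.
rewrite -[LHS](sum_shift (- b)%R).
apply: eq_bigr => a _; rewrite inE addrNK.
by case: (a - b \in A)%R; case: (b \in B); case: (_ \in C).
Qed.

Lemma FF_B (p : nat) (A B C : {set 'F_p}) : FF A B C + FF A (~: B) C = #|A| * #|C|.
Proof.
rewrite /FF -big_split /= !card_sum big_distrl /=; apply: eq_bigr => a _.
rewrite -big_split /= big_distrr /=.
rewrite -[LHS](sum_shift (- a)%R).
apply: eq_bigr => b _; rewrite inE (addrC a) addrNK.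
by case: (a \in A); case: (b - a \in B)%R; case: (_ \in C).
Qed.

Lemma count_range (n a b : nat) : \sum_(0 <= i < n) (a <= i < b) = minn n b - a.
Proof.
elim: n => [|n IH]; first by rewrite big_geq //; lia.
rewrite big_nat_recr //= IH.
case: (leqP a n) => h1; case: (ltnP n b) => h2 /=; lia.
Qed.

Lemma sumF (p : nat) (g : nat -> nat) : prime p ->
  \sum_(x : 'F_p) g (nat_of_ord x) = \sum_(0 <= i < p) g i.
Proof.
move=> pr.
have := @big_mkord nat 0 addn ((Zp_trunc (pdiv p)).+2) xpredT g.
rewrite Fp_cast // => <-.
Qed.

Definition Iv (p a b : nat) : {set 'F_p} := [set x : 'F_p | a <= x < b].

Lemma card_Iv (p a b : nat) : prime p -> b <= p -> #|Iv p a b| = b - a.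
Proof.
move=> pr hb; rewrite card_sum.
rewrite (eq_bigr (fun x : 'F_p => (a <= nat_of_ord x < b) : nat)); last by move=> x _; rewrite inE.
rewrite (sumF (fun i => (a <= i < b) : nat)) // count_range; lia.
Qed.

Lemma val_add (p : nat) (x y : 'F_p) : prime p -> x + y < p -> nat_of_ord (x + y)%R = x + y.
Proof.
move=> pr h; have -> : nat_of_ord (x + y)%R = (x + y) %% (Zp_trunc (pdiv p)).+2 by [].
by rewrite [X in _ %% X]Fp_cast // modn_small.
Qed.

Lemma ltF (p : nat) (x : 'F_p) : prime p -> x < p.
Proof. by move=> pr; have := ltn_ord x; rewrite [X in _ < X -> _]Fp_cast. Qed.

Lemma key (p : nat) (A B C : {set 'F_p}) k :
  FF A B C + ff k A B <= #|A| * #|B| + k * #|C|.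
Proof.
rewrite FF_rr /ff -sum_rr card_sum big_distrr /= -!big_split /=; apply: leq_sum => x _.
case: (x \in C) => /=; lia.
Qed.

Lemma main_small (q l : nat) (T1 T2 T3 : {set 'F_q}) : prime q -> 0 < l ->
  #|T1| = l -> #|T2| = l -> #|T3| = l -> 3 * l <= 2 * q ->
  4 * FF T1 T2 T3 <= 3 * l * l + odd l.
Proof.
move=> pr l0 h1 h2 h3 hs.
have K := key T1 T2 T3 (l./2).
have P := pollard pr (n := #|T2|) (A := T1) (B := T2) (k := l./2) (leqnn _).
rewrite h1 h2 h3 in K P.
have hl := odd_double_half l.
have e : minn q (l + l - l./2) = l + l - l./2 by lia.
rewrite e in P.
have P' := P ltac:(lia) ltac:(lia).
move: K P' hl; move: (FF T1 T2 T3) (ff l./2 T1 T2) => N f.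
move: (l./2) (odd l) => k o.
case: o => /= K P' hl; rewrite -hl in K P' *; nia.
Qed.

Lemma main_large (q l : nat) (T1 T2 T3 : {set 'F_q}) : prime q -> 0 < l -> l <= q ->
  #|T1| = l -> #|T2| = l -> #|T3| = l -> 2 * q < 3 * l ->
  FF T1 T2 T3 <= q * q - 3 * l * (q - l).
Proof.
move=> pr l0 lq h1 h2 h3 hs.
have K := key T1 T2 T3 (2 * l - q).
have P := pollard pr (n := #|T2|) (A := T1) (B := T2) (k := 2 * l - q) (leqnn _).
rewrite h1 h2 h3 in K P.
have e : minn q (l + l - (2 * l - q)) = q by lia.
rewrite e in P.
have P' := P ltac:(lia) ltac:(lia).
move: K P'; move: (FF T1 T2 T3) (ff (2 * l - q) T1 T2) => N f K P'.
clear P e h1 h2 h3 pr T1 T2 T3.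
have [u hu] : exists u, q = l + u by exists (q - l); lia.
subst q.
have [w hw] : exists w, l = w + u by exists (l - u); lia.
subst l.
have E1 : 2 * (w + u) - (w + u + u) = w by lia.
rewrite E1 in K P'.
have -> : (w + u + u) * (w + u + u) - 3 * (w + u) * (w + u + u - (w + u)) = w * w + w * u + u * u by nia.
nia.
Qed.

Lemma restrict (g : nat -> nat) n l : l <= n -> (forall i, l <= i -> g i = 0) ->
  \sum_(0 <= i < n) g i = \sum_(0 <= i < l) g i.
Proof.
move=> ln hg; rewrite (big_cat_nat _ (n := l)) //=.
rewrite [X in _ + X](eq_big_nat _ _ (F2 := fun _ => 0)); last by move=> i /andP [hi _]; exact: hg.
by rewrite sum_nat_const_nat muln0 addn0.
Qed.

Lemma Da (c n : nat) : n <= c ->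
  2 * \sum_(0 <= i < n) ((c - i) + (i - c)) + (c - n) * (c - n + 1) = c * (c + 1).
Proof.
elim: n => [|n IH] hn; first by rewrite big_geq // muln0 add0n subn0.
rewrite big_nat_recr //= mulnDr.
have := IH ltac:(lia).
have [t ht] : exists t, c = n + t.+1 by exists (c - n).-1; lia.
subst c.
have -> : n + t.+1 - n = t.+1 by lia.
have -> : n + t.+1 - n.+1 = t by lia.
have -> : n - (n + t.+1) = 0 by lia.
nia.
Qed.

Lemma Db (c m : nat) :
  2 * \sum_(0 <= i < c + m) ((c - i) + (i - c)) = c * (c + 1) + m * (m - 1).
Proof.
elim: m => [|m IH].
  have := Da (leqnn c); rewrite addn0 subnn mul0n addn0 muln0 addn0; by [].
rewrite addnS big_nat_recr //= mulnDr IH.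
have -> : c - (c + m) + (c + m - c) = m by lia.
case: m {IH} => [|m] /=; [lia | nia].
Qed.

Lemma inner_count (l h i : nat) : i < l -> h <= l ->
  \sum_(0 <= j < l) (h <= i + j < h + l) = l - (h - i) - (i - h).
Proof.
move=> il hl.
rewrite (eq_big_nat _ _ (F2 := fun j => (h - i <= j < h + l - i) : nat)); last first.
  move=> j _; congr (nat_of_bool _); apply/idP/idP => /andP [a b]; apply/andP; split; lia.
rewrite count_range; lia.
Qed.

Lemma S_count (l : nat) :
  4 * \sum_(0 <= i < l) \sum_(0 <= j < l) (l./2 <= i + j < l./2 + l) = 3 * l * l + odd l.
Proof.
set h := l./2.
have hl : odd l + h * 2 = l by rewrite /h; have := odd_double_half l; rewrite -muln2.
have hhl : h <= l by rewrite /h; lia.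
rewrite (eq_big_nat _ _ (F2 := fun i => l - (h - i) - (i - h))); last first.
  by move=> i /andP [_ il]; rewrite inner_count.
have E : \sum_(0 <= i < l) (l - (h - i) - (i - h)) + \sum_(0 <= i < l) ((h - i) + (i - h)) = l * l.
  rewrite -big_split /=.
  rewrite (eq_big_nat _ _ (F2 := fun _ => l)); last by move=> i /andP [_ il]; lia.
  by rewrite sum_nat_const_nat subn0.
have D := Db h (l - h).
have e : h + (l - h) = l by lia.
rewrite e in D.
clearbody h.
move: E D hl; move: (\sum_(0 <= i < l) (l - (h - i) - (i - h))) (\sum_(0 <= i < l) ((h - i) + (i - h))) => S D.
case: (odd l) => /= E D2 hl; subst l.
- have e1 : 1 + h * 2 - h = h + 1 by lia.
  have e2 : h + 1 - 1 = h by lia.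
  rewrite e1 e2 in D2.
  have D3 : D = h * (h + 1) by lia.
  subst D.
  have e3 : (1 + h * 2) * (1 + h * 2) = h * (h + 1) + (3 * (h * h) + 3 * h + 1) by ring.
  rewrite e3 in E.
  have E2 : S = 3 * (h * h) + 3 * h + 1 by lia.
  rewrite E2; ring.
- have e1 : 0 + h * 2 - h = h by lia.
  rewrite e1 in D2.
  have e2 : h * (h - 1) = h * h - h by rewrite mulnBr muln1.
  rewrite e2 in D2.
  have hh : h <= h * h by case: (h) => // n; rewrite leq_pmulr.
  have D3 : D = h * h by lia.
  subst D.
  have e3 : (0 + h * 2) * (0 + h * 2) = h * h + 3 * (h * h) by ring.
  rewrite e3 in E.
  have E2 : S = 3 * (h * h) by lia.
  rewrite E2; ring.
Qed.

Lemma constr1_lb (q l : nat) : prime q -> l + l./2 <= q ->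
  \sum_(0 <= i < l) \sum_(0 <= j < l) (l./2 <= i + j < l./2 + l)
  <= FF (Iv q 0 l) (Iv q 0 l) (Iv q l./2 (l./2 + l)).
Proof.
move=> pr hq; set h := l./2 in hq *.
set G := fun i j => ((i < l) && (j < l) && (h <= i + j < h + l)) : nat.
have L1 : \sum_(a : 'F_q) \sum_(b : 'F_q) G a b <= FF (Iv q 0 l) (Iv q 0 l) (Iv q h (h + l)).
  apply: leq_sum => a _; apply: leq_sum => b _; rewrite /G !inE.
  case: (ltnP a l) => ha //=; case: (ltnP b l) => hb //=.
  case hab : (h <= a + b < h + l) => //=.
  by rewrite [X in _ %% X]Fp_cast // modn_small ?hab //; lia.
apply: leq_trans L1.
rewrite (eq_bigr (fun a : 'F_q => \sum_(0 <= j < q) G a j)); last by move=> a _; rewrite (sumF (G a)).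
rewrite (sumF (fun i => \sum_(0 <= j < q) G i j)) //.
rewrite (@restrict (fun i => \sum_(0 <= j < q) G i j) q l); last 2 first.
- lia.
- move=> i hi; rewrite (eq_big_nat _ _ (F2 := fun _ => 0)) ?sum_nat_const_nat ?muln0 //.
  by move=> j _; rewrite /G; have -> : (i < l) = false by lia.
rewrite leq_eqVlt; apply/orP; left; apply/eqP.
apply: eq_big_nat => i /andP [_ il].
rewrite (@restrict (G i) q l); last 2 first.
- lia.
- move=> j hj; rewrite /G; have -> : (j < l) = false by lia.
  by rewrite andbF.
by apply: eq_big_nat => j /andP [_ jl]; rewrite /G il jl.
Qed.

Lemma card_IvC (q a b : nat) : prime q -> b <= q -> #|~: Iv q a b| = q - (b - a).
Proof.
move=> pr hb; have := cardsC (Iv q a b); rewrite card_Fp // card_Iv //; lia.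
Qed.

Lemma constr2 (q l : nat) : prime q -> l <= q -> 2 * q < 3 * l ->
  FF (~: Iv q 0 (q - l)) (~: Iv q 0 (q - l)) (~: Iv q (2 * (q - l) - 1) (3 * (q - l) - 1))
  = q * q - 3 * l * (q - l).
Proof.
move=> pr lq hs.
set u := q - l.
set I0 := Iv q 0 u.
set C := Iv q (2 * u - 1) (3 * u - 1).
have cI : #|I0| = u by rewrite card_Iv //; lia.
have cC : #|C| = u by rewrite card_Iv //; lia.
have cIC : #|~: I0| = l by rewrite card_IvC //; lia.
have cCC : #|~: C| = l by rewrite card_IvC //; lia.
have Z : FF I0 I0 C = 0.
  apply/eqP; rewrite sum_nat_eq0; apply/forallP => a; apply/implyP => _.
  rewrite sum_nat_eq0; apply/forallP => b; apply/implyP => _.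
  rewrite /I0 /C !inE.
  case: (ltnP a u) => ha; last by rewrite andbF.
  case: (ltnP b u) => hb; last by rewrite andbF.
  rewrite val_add //; last by lia.
  have -> : (2 * u - 1 <= a + b) = false by lia.
  by rewrite andbF.
have E1 := FF_C I0 I0 C.
have E2 := FF_B I0 I0 (~: C).
have E3 := FF_A I0 (~: I0) (~: C).
rewrite Z cI add0n in E1.
rewrite cI cCC in E2.
rewrite cIC cCC in E3.
move: E1 E2 E3; rewrite -/u.
move: (FF I0 I0 (~: C)) (FF I0 (~: I0) (~: C)) (FF (~: I0) (~: I0) (~: C)) => X Y W E1 E2 E3.
have hq : q = u + l by lia.
rewrite hq.
nia.
Qed.

Local Open Scope ring_scope.

Lemma prob_FF (q : nat) (T1 T2 T3 : {set 'F_q}) :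
  prob_sum_in T1 T2 T3 = (FF T1 T2 T3)%:R / ((#|T1| * #|T2|)%N)%:R.
Proof. by rewrite /prob_sum_in card_FF. Qed.

Lemma frac_le (N X l : nat) : (0 < l)%N -> (4 * N <= X)%N ->
  N%:R / ((l * l)%N)%:R <= X%:R / (4 * l%:R ^+ 2) :> rat.
Proof.
move=> l0 h.
have ln : l%:R != 0 :> rat by rewrite pnatr_eq0 -lt0n.
have -> : N%:R / ((l * l)%N)%:R = ((4 * N)%N)%:R / (4 * l%:R ^+ 2) :> rat.
  by rewrite !natrM expr2; field.
rewrite ler_pM2r ?ler_nat // invr_gt0 mulr_gt0 // exprn_gt0 // ltr0n //.
Qed.

Lemma frac_eq (N X l : nat) : (0 < l)%N -> (4 * N = X)%N ->
  N%:R / ((l * l)%N)%:R = X%:R / (4 * l%:R ^+ 2) :> rat.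
Proof.
move=> l0 <-.
have ln : l%:R != 0 :> rat by rewrite pnatr_eq0 -lt0n.
by rewrite !natrM expr2; field.
Qed.

Lemma sb_small (q l : nat) : (0 < l)%N -> (3 * l <= 2 * q)%N ->
  sum_bound q l = ((3 * l * l + odd l)%N)%:R / (4 * l%:R ^+ 2)
  /\ (if odd l then 3 / 4 + 1 / (4 * l%:R ^+ 2) else 3 / 4)
     = ((3 * l * l + odd l)%N)%:R / (4 * l%:R ^+ 2) :> rat.
Proof.
move=> l0 h.
have ln : l%:R != 0 :> rat by rewrite pnatr_eq0 -lt0n.
have H : ((3 * l)%N)%:R <= ((2 * q)%N)%:R :> rat by rewrite ler_nat.
rewrite !natrM in H.
rewrite /sum_bound.
have m1 : Num.max 0 (3 * l%:R - 2 * q%:R - 1) = 0 :> rat by rewrite max_l //; lra.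
have m2 : Num.max 0 (3 * l%:R - 2 * q%:R) = 0 :> rat by rewrite max_l //; lra.
rewrite m1 m2.
by case: (odd l); rewrite !natrD !natrM /=; split; field.
Qed.

Lemma sb_large (q l : nat) : (0 < l)%N -> (l <= q)%N -> (2 * q < 3 * l)%N ->
  sum_bound q l = ((4 * (q * q - 3 * l * (q - l)))%N)%:R / (4 * l%:R ^+ 2)
  /\ (q%:R ^+ 2 - 3 * l%:R * (q%:R - l%:R)) / l%:R ^+ 2
     = ((4 * (q * q - 3 * l * (q - l)))%N)%:R / (4 * l%:R ^+ 2) :> rat.
Proof.
move=> l0 lq h.
have ln : l%:R != 0 :> rat by rewrite pnatr_eq0 -lt0n.
have H : ((2 * q + 1)%N)%:R <= ((3 * l)%N)%:R :> rat by rewrite ler_nat addn1.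
rewrite !natrD in H.
have le1 : (3 * l * (q - l) <= q * q)%N by nia.
have E : ((4 * (q * q - 3 * l * (q - l)))%N)%:R = 4 * (q%:R ^+ 2 - 3 * l%:R * (q%:R - l%:R)) :> rat.
  by rewrite natrM natrB // !natrM natrB // expr2.
rewrite E /sum_bound.
have m1 : Num.max 0 (3 * l%:R - 2 * q%:R - 1) = 3 * l%:R - 2 * q%:R - 1 :> rat by rewrite max_r //; lra.
have m2 : Num.max 0 (3 * l%:R - 2 * q%:R) = 3 * l%:R - 2 * q%:R :> rat by rewrite max_r //; lra.
rewrite m1 m2.
by case: (odd l); split; field.
Qed.

Unset Implicit Arguments.
Set Strict Implicit.
Theorem lemma3p2 (q l : nat) :
  prime q -> (3 <= q)%N -> (0 < l)%N -> (l <= q)%N ->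
  (* main bound *)
  (forall T1 T2 T3 : {set 'F_q}, #|T1| = l -> #|T2| = l -> #|T3| = l ->
     prob_sum_in T1 T2 T3 <= sum_bound q l)
  (* tightness *)
  /\ (exists T1 T2 T3 : {set 'F_q}, [/\ #|T1| = l, #|T2| = l, #|T3| = l &
        prob_sum_in T1 T2 T3 = sum_bound q l])
  (* consequence (1) *)
  /\ ((3 * l <= 2 * q)%N ->
      forall T1 T2 T3 : {set 'F_q}, #|T1| = l -> #|T2| = l -> #|T3| = l ->
        prob_sum_in T1 T2 T3 <=
          (if odd l then 3 / 4 + 1 / (4 * l%:R ^+ 2) else 3 / 4))
  (* consequence (2) *)
  /\ ((2 * q < 3 * l)%N -> (l <= q - 1)%N ->
      forall T1 T2 T3 : {set 'F_q}, #|T1| = l -> #|T2| = l -> #|T3| = l ->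
        prob_sum_in T1 T2 T3 <=
          (q%:R ^+ 2 - 3 * l%:R * (q%:R - l%:R)) / l%:R ^+ 2).
Proof.
move=> pr q3 l0 lq.
have main : forall T1 T2 T3 : {set 'F_q}, #|T1| = l -> #|T2| = l -> #|T3| = l ->
     prob_sum_in T1 T2 T3 <= sum_bound q l.
  move=> T1 T2 T3 h1 h2 h3; rewrite prob_FF h1 h2.
  case: (leqP (3 * l) (2 * q)) => hs.
  - have [-> _] := sb_small l0 hs.
    by apply: frac_le => //; apply: main_small.
  - have [-> _] := sb_large l0 lq hs.
    apply: frac_le => //; have := main_large pr l0 lq h1 h2 h3 hs; lia.
split; first exact: main.
split.
  case: (leqP (3 * l) (2 * q)) => hs.
  - have hq : (l + l./2 <= q)%N by lia.
    exists (Iv q 0 l), (Iv q 0 l), (Iv q l./2 (l./2 + l)).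
    have c1 : #|Iv q 0 l| = l by rewrite card_Iv //; lia.
    have c3 : #|Iv q l./2 (l./2 + l)| = l by rewrite card_Iv //; lia.
    split => //.
    have [-> _] := sb_small l0 hs.
    rewrite prob_FF c1; apply: frac_eq => //.
    apply/eqP; rewrite eqn_leq; apply/andP; split.
      exact: main_small.
    rewrite -S_count leq_mul2l /=; exact: constr1_lb.
  - exists (~: Iv q 0 (q - l)), (~: Iv q 0 (q - l)), (~: Iv q (2 * (q - l) - 1) (3 * (q - l) - 1)).
    have c1 : #|~: Iv q 0 (q - l)| = l by rewrite card_IvC //; lia.
    have c3 : #|~: Iv q (2 * (q - l) - 1) (3 * (q - l) - 1)| = l by rewrite card_IvC //; lia.
    split => //.
    have [-> _] := sb_large l0 lq hs.
    rewrite prob_FF c1; apply: frac_eq => //.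
    by rewrite constr2.
split.
  move=> hs T1 T2 T3 h1 h2 h3.
  have [E1 E2] := sb_small l0 hs.
  by rewrite E2 -E1; apply: main.
move=> hs _ T1 T2 T3 h1 h2 h3.
have [E1 E2] := sb_large l0 lq hs.
by rewrite E2 -E1; apply: main.
Qed.
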